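(* Let $G$ be a connected graph. Then $\mathrm{lpt}(G)\le \max |C^*|$, where the maximum is taken over all bonds $C^*$ of $G$.
   Context: All graphs are finite, simple and undirected. $\mathrm{lpt}(G)$ denotes the minimum size of a set of vertices of $G$ that intersects (shares a vertex with) every longest path of $G$. A bond of $G$ is a minimal nonempty edge-cut, where an edge-cut is a set of edges of the form $\{xy\in E(G): x\in X, y\in V(G)\setminus X\}$ for some $X\subseteq V(G)$; $|C^*|$ is the number of edges of the bond $C^*$. *)

(* Defs.v *)
(* Simple graphs: symmetric irreflexive relation e on a finType T. *)
From mathcomp Require Import all_boot.
From Stdlib Require Import ClassicalEpsilon.
Set Implicit Arguments. Unset Strict Implicit. Unset Printing Implicit Defensive.

Section Graphs.
Variables (T : finType) (e : rel T).

(* A path: nonempty sequence of pairwise distinct vertices, consecutive ones adjacent.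
   Its length (number of edges) is size s - 1. *)
Definition is_path (s : seq T) : bool :=
  if s is x :: s' then path e x s' && uniq s else false.

Definition is_longest_path (s : seq T) : Prop :=
  is_path s /\ forall t : seq T, is_path t -> size t <= size s.

Definition meets_all_longest (S : {set T}) : Prop :=
  forall s : seq T, is_longest_path s -> exists2 x, x \in S & x \in s.

Definition meets_all_longestb (S : {set T}) : bool :=
  if excluded_middle_informative (meets_all_longest S) then true else false.

(* lpt(G): minimum size of a vertex set meeting every longest path.
   (setT always meets every longest path, so the default #|T| is harmless.) *)
Definition lpt : nat :=
  \big[minn/#|T|]_(S : {set T} | meets_all_longestb S) #|S|.

(* Edges are unordered pairs [set x; y] with e x y. *)
Definition edge_cut (X : {set T}) : {set {set T}} :=
  [set [set x; y] | x in X, y in ~: X & e x y].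

Definition is_edge_cut (C : {set {set T}}) : bool :=
  [exists X : {set T}, C == edge_cut X].

Definition is_bond (C : {set {set T}}) : bool :=
  [&& C != set0, is_edge_cut C &
      [forall D : {set {set T}}, (is_edge_cut D && (D != set0)) ==> ~~ (D \proper C)]].

Definition connected_graph : Prop := forall x y : T, connect e x y.

End Graphs.

(* Main.v *)
Require Import Defs.
From mathcomp Require Import all_boot zify.
From Stdlib Require Import Classical ClassicalEpsilon.
Set Implicit Arguments. Unset Strict Implicit. Unset Printing Implicit Defensive.

Section Proof.
Variables (T : finType) (e : rel T).
Hypothesis e_sym : symmetric e.
Hypothesis G_conn : connected_graph e.

Definition conn (A : {set T}) : Prop :=
  forall U : {set T}, U \subset A ->
   (forall x y, x \in U -> y \in A -> y \notin U -> ~~ e x y) -> U = set0 \/ U = A.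

Lemma crossing (U : {set T}) s : sorted e s ->
  (exists2 x, x \in s & x \in U) -> (exists2 y, y \in s & y \notin U) ->
  exists x y, [/\ x \in s, y \in s, x \in U, y \notin U & e x y].
Proof.
elim: s => [|h t IH] /=; first by move=> _ [x].
move=> st [x xs xU] [y ys yU].
case: t IH st xs ys => [|h' t'] IH st xs ys.
  move: xs ys; rewrite !inE => /eqP ex /eqP ey; by move: xU yU; rewrite ex ey => ->.
move: st => /= /andP [ehh' pt].
case: (boolP (h \in U)) => hU; case: (boolP (h' \in U)) => h'U.
- have [||x1 [y1 [? ? ? ? ?]]] := IH pt.
    by exists h'; rewrite ?inE ?eqxx.
    move: ys; rewrite inE => /orP [/eqP ?|ys]; first by subst; rewrite hU in yU.
    by exists y.
  by exists x1, y1; rewrite !inE; split => //; apply/orP; right.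
- by exists h, h'; rewrite !inE !eqxx ?orbT.
- by exists h', h; rewrite !inE !eqxx ?orbT e_sym.
- have [||x1 [y1 [? ? ? ? ?]]] := IH pt.
    move: xs; rewrite inE => /orP [/eqP ?|xs]; first by subst; rewrite xU in hU.
    by exists x.
    by exists h'; rewrite ?inE ?eqxx.
  by exists x1, y1; rewrite !inE; split => //; apply/orP; right.
Qed.

Lemma conn_setT : conn setT.
Proof.
move=> U _ HU; case: (set_0Vmem U) => [->|[u uU]]; [by left|right].
apply/setP => y; rewrite inE.
have cl : closed e (mem U).
  move=> x z exz; case: (boolP (x \in U)) => xU; case: (boolP (z \in U)) => zU //.
  - by have := HU x z xU (in_setT _) zU; rewrite exz.
  - by have := HU z x zU (in_setT _) xU; rewrite e_sym exz.
by rewrite -(closed_connect cl (G_conn u y)).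
Qed.

Lemma cross_edge (X : {set T}) : X != set0 -> ~: X != set0 ->
  exists x y, [/\ x \in X, y \notin X & e x y].
Proof.
move=> Xn Yn.
case: (boolP [exists x, exists y, [&& x \in X, y \notin X & e x y]]).
  by move=> /existsP [x /existsP [y /and3P [? ? ?]]]; exists x, y.
move=> H; exfalso.
have := conn_setT (subsetT X).
case.
- move=> x y xX _ yX; apply/negP => exy; move/negP: H; apply.
  by apply/existsP; exists x; apply/existsP; exists y; rewrite xX yX.
- by move=> X0; rewrite X0 eqxx in Xn.
- by move=> XT; rewrite XT setCT eqxx in Yn.
Qed.


Definition erel (W : {set T}) := [rel u v | e u v && (u \in W) && (v \in W)].
Definition comp (W : {set T}) b := [set z | connect (erel W) b z].

Lemma comp_self (W : {set T}) (b : T) : b \in comp W b.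
Proof. by rewrite inE connect0. Qed.

Lemma comp_sub (W : {set T}) (b : T) : b \in W -> comp W b \subset W.
Proof.
move=> bW; apply/subsetP => z; rewrite inE => cz.
have cl : closed (erel W) (mem W).
  by move=> x y /= /andP [/andP [_ ->] ->].
by rewrite -(closed_connect cl cz).
Qed.

Lemma comp_closed (W : {set T}) (b x y : T) : b \in W -> x \in comp W b -> y \in W -> e x y ->
  y \in comp W b.
Proof.
move=> bW xK yW exy; have xW := subsetP (comp_sub bW) _ xK.
move: xK; rewrite !inE => cx; apply: (connect_trans cx); apply: connect1.
by rewrite /= exy xW yW.
Qed.

Lemma conn_comp (W : {set T}) (b : T) : b \in W -> conn (comp W b).
Proof.
move=> bW U UK HU.
have key : forall c p, c \in comp W b -> path (erel W) c p ->
    (last c p \in U) = (c \in U).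
  move=> c p; elim: p c => [|c' p IH] c //= cK /andP [ec pp].
  have c'K : c' \in comp W b.
    by move: ec => /= /andP [/andP [ecc' _] c'W]; apply: (comp_closed bW cK).
  rewrite (IH c' c'K pp).
  move: ec => /= /andP [/andP [ecc' _] _].
  case: (boolP (c \in U)) => cU; case: (boolP (c' \in U)) => c'U //.
  - by have := HU c c' cU c'K c'U; rewrite ecc'.
  - by have := HU c' c c'U cK cU; rewrite e_sym ecc'.
have allK : forall z, z \in comp W b -> (z \in U) = (b \in U).
  move=> z zK; move: (zK); rewrite inE => /connectP [p pp ->].
  by apply: key => //; apply: comp_self.
case: (boolP (b \in U)) => bU; [right|left]; apply/setP => z.
  apply/idP/idP => [/(subsetP UK)//|zK]; by rewrite allK.
rewrite inE; apply/negP => zU.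
by move: bU; rewrite -(allK z (subsetP UK _ zU)) zU.
Qed.

Lemma conn_U (X K : {set T}) x k : conn X -> conn K -> x \in X -> k \in K ->
  e x k -> conn (X :|: K).
Proof.
move=> cX cK xX kK exk U UXK HU.
have cl : forall A : {set T}, A \subset X :|: K -> conn A -> 
    U :&: A = set0 \/ U :&: A = A.
  move=> A AXK cA; apply: cA; first exact: subsetIr.
  move=> u v; rewrite !inE => /andP [uU uA] vA; rewrite vA andbT => vU.
  exact: HU uU (subsetP AXK _ vA) vU.
have [hX|hX] := cl X (subsetUl _ _) cX; have [hK|hK] := cl K (subsetUr _ _) cK.
- left; apply/setP => z; rewrite inE; apply/negP => zU.
  move/subsetP: UXK => /(_ z zU); rewrite inE => /orP [zX|zK].
    have : z \in U :&: X by rewrite inE zU.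
    by rewrite hX inE.
  have : z \in U :&: K by rewrite inE zU.
  by rewrite hK inE.
- exfalso. have kU : k \in U by have := kK; rewrite -hK inE => /andP [].
  have xU : x \notin U.
    apply/negP => xU; have : x \in U :&: X by rewrite inE xU.
    by rewrite hX inE.
  by have := HU k x kU (subsetP (subsetUl X K) _ xX) xU; rewrite e_sym exk.
- exfalso. have xU : x \in U by have := xX; rewrite -hX inE => /andP [].
  have kU : k \notin U.
    apply/negP => kU; have : k \in U :&: K by rewrite inE kU.
    by rewrite hK inE.
  by have := HU x k xU (subsetP (subsetUr X K) _ kK) kU; rewrite exk.
- right; apply/setP => z; apply/idP/idP => [/(subsetP UXK)//|].
  rewrite inE => /orP [zX|zK].
    by have := zX; rewrite -hX inE => /andP [].
  by have := zK; rewrite -hK inE => /andP [].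
Qed.


Lemma comp_notQ (Y : {set T}) (Q : seq T) b z : b \in Y -> b \notin Q ->
  z \in comp (Y :\: [set z in Q]) b -> (z \in Y) && (z \notin Q).
Proof.
move=> bY bQ zK.
have bW : b \in Y :\: [set z in Q] by rewrite !inE bQ bY.
by have := subsetP (comp_sub bW) _ zK; rewrite !inE andbC.
Qed.

Lemma conn_rest (Y : {set T}) (Q : seq T) (b : T) : conn Y -> sorted e Q ->
  {subset Q <= Y} -> b \in Y -> b \notin Q ->
  conn (Y :\: comp (Y :\: [set z in Q]) b).
Proof.
move=> cY sQ QY bY bQ.
set W := Y :\: [set z in Q]; set K := comp W b.
have bW : b \in W by rewrite !inE bQ bY.
have QK : forall z, z \in Q -> z \notin K.
  by move=> z zQ; apply/negP => /(comp_notQ bY bQ) /andP [_]; rewrite zQ.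
have A : forall U' : {set T}, U' \subset Y :\: K ->
    (forall x y, x \in U' -> y \in Y :\: K -> y \notin U' -> ~~ e x y) ->
    (forall z, z \in Q -> z \notin U') -> U' = set0.
  move=> U' sU' HU' QU'.
  have sUY : U' \subset Y by apply: (subset_trans sU'); apply: subsetDl.
  have := cY U' sUY; case => //.
    move=> x y xU yY yU; case: (boolP (y \in K)) => yK; last first.
      by apply: HU' xU _ yU; rewrite inE yK yY.
    apply/negP => exy.
    have xW : x \in W.
      rewrite !inE (subsetP sUY _ xU) andbT; apply/negP => xQ.
      by move: (QU' x xQ); rewrite xU.
    have xK : x \in K by apply: (comp_closed bW yK xW); rewrite e_sym.
    by move: (subsetP sU' _ xU); rewrite inE xK.
  move=> UY; have : b \in U' by rewrite UY.
  move/(subsetP sU'); by rewrite inE comp_self.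
move=> U sU HU.
case: (boolP [exists z, (z \in Q) && (z \in U)]) => [/existsP [q /andP [qQ qU]]|nQ].
  have allQ : forall z, z \in Q -> z \in U.
    move=> z zQ; apply/negPn/negP => zU.
    have [x [y [xQ yQ xU yU exy]]] := crossing sQ (ex_intro2 _ _ q qQ qU)
       (ex_intro2 _ _ z zQ zU).
    have : y \in Y :\: K by rewrite inE QK // QY.
    by move=> /(HU x y xU) /(_ yU); rewrite exy.
  right.
  have U0 : (Y :\: K) :\: U = set0.
    apply: A; first exact: subsetDl.
    - move=> x y xU' yYK yU'.
      have /andP [xU xYK] : (x \notin U) && (x \in Y :\: K) by move: xU'; rewrite inE.
      have yU : y \in U by move: yU'; rewrite inE yYK andbT negbK.
      by rewrite e_sym; apply: HU yU xYK xU.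
    - by move=> z zQ; rewrite !inE allQ.
  apply/setP => z; apply/idP/idP => [/(subsetP sU)//|zYK].
  apply/negPn/negP => zU; have : z \in (Y :\: K) :\: U by rewrite inE zU.
  by rewrite U0 inE.
left; apply: A => // z zQ; apply/negP => zU; move/negP: nQ; apply.
by apply/existsP; exists z; rewrite zQ.
Qed.


Lemma is_pathE s : is_path e s = (s != [::]) && sorted e s && uniq s.
Proof. by case: s. Qed.

Lemma segment (A B : seq T) w : forall a m, a \in A ->
  all (fun z => (z \notin A) && (z \notin B)) m -> path e a (m ++ w) ->
  last a (m ++ w) \in B -> a \notin B ->
  exists a' m' q, [/\ a' \in A, q \in B,
     all (fun z => (z \notin A) && (z \notin B)) m' & path e a' (rcons m' q)].
Proof.
elim: w => [|y w IH] a m aA am pam lB aB.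
  exfalso; move: lB; rewrite cats0.
  case/lastP: m am pam => [|m z] //=; first by rewrite (negbTE aB).
  rewrite last_rcons all_rcons => /andP [/andP [_ zB] _] _.
  by rewrite (negbTE zB).
move: pam; rewrite cat_path /= => /and3P [pam eay pyw].
case: (boolP (y \in B)) => yB.
  by exists a, m, y; rewrite rcons_path pam eay.
case: (boolP (y \in A)) => yA.
  apply: (IH y [::]) => //=.
  by move: lB; rewrite last_cat.
apply: (IH a (rcons m y)) => //.
- by rewrite all_rcons yA yB am.
- by rewrite cat_rcons cat_path pam /= eay pyw.
- by rewrite cat_rcons.
Qed.

Lemma half (P : seq T) a : sorted e P -> uniq P -> a \in P ->
  exists A', [/\ sorted e (rcons A' a), uniq (rcons A' a),
     {subset rcons A' a <= P} & size P < 2 * size (rcons A' a)].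
Proof.
move=> sP uP aP; case/splitPr: P / aP sP uP => P1 P2.
rewrite sorted_cat_cons cat_uniq => /andP [s1 s2] /and3P [u1 h12 u2].
case: (leqP (size P2) (size P1)) => hs.
  exists P1; split => //.
  - rewrite rcons_uniq u1 andbT; apply/negP => aP1; move/negP: h12; apply.
    by apply/hasP; exists a; rewrite ?inE ?eqxx.
  - by move=> z; rewrite mem_rcons mem_cat !inE; case/orP => ->; rewrite ?orbT.
  - rewrite size_rcons size_cat /=; move: hs; rewrite -/(size P1) -/(size P2); set n1 := size P1; set n2 := size P2; lia.
exists (rev P2); rewrite -rev_cons; split.
- rewrite rev_sorted (@eq_sorted _ _ e) //= => x y; by rewrite e_sym.
- by rewrite rev_uniq.
- by move=> z; rewrite mem_rev mem_cat => ->; rewrite orbT.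
- rewrite size_rev /= size_cat /=; move: hs; set n1 := size P1; set n2 := size P2; lia.
Qed.

Lemma sorted_join s x t : sorted e (rcons s x) -> path e x t -> sorted e (s ++ x :: t).
Proof. by rewrite sorted_cat_cons => -> ->. Qed.


Lemma longest_meet P R : is_longest_path e P -> is_longest_path e R ->
  exists2 z, z \in P & z \in R.
Proof.
move=> [pP lP] [pR lR].
case: (boolP (has (mem R) P)) => [/hasP [z zP zR]|nh]; first by exists z.
exfalso.
have disj : forall z, z \in P -> z \notin R.
  by move=> z zP; apply/negP => zR; move/negP: nh; apply; apply/hasP; exists z.
move: (pP) (pR); rewrite !is_pathE => /andP [/andP [P0 sP] uP] /andP [/andP [R0 sR] uR].
have [a0 a0P] : exists a0, a0 \in P by case: (P) P0 => // x ? _; exists x; exact: mem_head.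
have [q0 q0R] : exists q0, q0 \in R by case: (R) R0 => // x ? _; exists x; exact: mem_head.
have /connectP [w pw lw] := G_conn a0 q0.
have lw' : last a0 ([::] ++ w) \in R by rewrite /= -lw.
have [a [m [q [aP qR mall pm]]]] := @segment P R w a0 [::] a0P erefl pw lw' (disj _ a0P).
have : last a (rcons m q) = q by rewrite last_rcons.
case: (shortenP pm) => p' pp' up' sub' lp'.
case/lastP: p' pp' up' sub' lp' => [|m'' q'] pp' up' sub' lp'.
  by move: lp' => /= aq; move: (disj _ aP); rewrite aq qR.
move: lp'; rewrite !last_rcons => ?; subst q'.
have mP : forall z, z \in m'' -> (z \notin P) && (z \notin R).
  move=> z zm; have : z \in rcons m q by apply: sub'; rewrite mem_rcons inE zm orbT.
  rewrite mem_rcons inE => /orP [/eqP zq|zm'].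
    by move: up'; rewrite /= rcons_uniq -zq zm andbF.
  by move/allP: mall => /(_ z zm').
have [A1 [sA uA subA szA]] := half sP uP aP.
have [B1 [sB uB subB szB]] := half sR uR qR.
set t := A1 ++ a :: (m'' ++ q :: rev B1).
have st : sorted e t.
  apply: sorted_join => //.
  have : sorted e ((a :: m'') ++ q :: rev B1).
    apply: sorted_join => //.
    rewrite -/(sorted e (q :: rev B1)) -rev_rcons rev_sorted.
    by rewrite (@eq_sorted _ _ e) // => x y; rewrite e_sym.
  by [].
have ut : uniq t.
  have u1 : uniq (a :: rcons m'' q) by [].
  move: u1; rewrite /= rcons_uniq => /andP [_ /andP [_ um]].
  have uq : uniq (q :: rev B1) by rewrite -rev_rcons rev_uniq.
  rewrite /t -cat_rcons cat_uniq uA (cat_uniq m'') um uq !andbT.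
  apply/and3P; split => //.
    apply/hasPn => z zin; apply/negP => zA; have zP := subA _ zA.
    move: zin; rewrite mem_cat => /orP [zm|zq].
      by move: (mP z zm); rewrite zP.
    have zR : z \in R by apply: subB; move: zq; rewrite mem_rcons !inE mem_rev.
    by move: (disj _ zP); rewrite zR.
  apply/hasPn => z zin; apply/negP => zm.
  have zR : z \in R by apply: subB; move: zin; rewrite mem_rcons !inE mem_rev.
  by move: (mP z zm); rewrite zR andbF.
have pt : is_path e t by rewrite is_pathE st ut andbT /t; case: (A1).
have h1 := lP t pt.
have h2 := lR P pP.
have h3 := lP R pR.
move: h1 h2 h3 szA szB; rewrite /t size_cat /= size_cat /= size_rev !size_rcons.
set n1 := size A1; set n2 := size B1; set n3 := size m''; set nP := size P; set nR := size R.
move=> h1 h2 h3 h4 h5; clearbody n1 n2 n3 nP nR; clear -h1 h2 h3 h4 h5; lia.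
Qed.


Lemma cut_in (X : {set T}) x y : x \in X -> y \notin X -> e x y ->
  [set x; y] \in edge_cut e X.
Proof.
move=> xX yX exy; apply/imset2P; exists x y => //.
by rewrite !inE yX exy.
Qed.

Lemma cutP (X : {set T}) E : E \in edge_cut e X ->
  exists x y, [/\ x \in X, y \notin X, e x y & E = [set x; y]].
Proof.
case/imset2P => x y xX; rewrite !inE => /andP [yX exy] ->.
by exists x, y.
Qed.

Lemma constZ (Z A : {set T}) : Z :&: A = set0 \/ Z :&: A = A ->
  exists c, forall z, z \in A -> (z \in Z) = c.
Proof.
case=> h; [exists false|exists true] => z zA.
  apply/negP => zZ; have : z \in Z :&: A by rewrite inE zZ zA.
  by rewrite h inE.
by move: zA; rewrite -h inE => /andP [].
Qed.

Lemma bond_of (X : {set T}) : X != set0 -> ~: X != set0 -> conn X ->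
  conn (~: X) -> is_bond e (edge_cut e X).
Proof.
move=> Xn Yn cX cY.
have [x0 [y0 [x0X y0X e0]]] := cross_edge Xn Yn.
apply/and3P; split.
- by apply/set0Pn; exists [set x0; y0]; exact: cut_in.
- by apply/existsP; exists X.
apply/forallP => D; apply/implyP => /andP [/existsP [Z /eqP ->] Dn0].
apply/negP => /properP [sub [E EX EZ]].
have helper : forall u v, u \in Z -> v \notin Z -> e u v ->
    (u \in X) = (v \in X) -> False.
  move=> u v uZ vZ euv uvX.
  have := subsetP sub _ (cut_in uZ vZ euv).
  case/cutP => x [y [xX yX exy Eq]].
  have xin : x \in [set u; v] by rewrite Eq !inE eqxx.
  have yin : y \in [set u; v] by rewrite Eq !inE eqxx orbT.
  have hx : (x \in X) = (u \in X).
    by move: xin; rewrite !inE => /orP [/eqP ->|/eqP ->].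
  have hy : (y \in X) = (u \in X).
    by move: yin; rewrite !inE => /orP [/eqP ->|/eqP ->].
  by move: yX; rewrite hy -hx xX.
have cl : forall A : {set T}, conn A ->
    (forall u v, u \in A -> v \in A -> (u \in X) = (v \in X)) ->
    Z :&: A = set0 \/ Z :&: A = A.
  move=> A cA hA; apply: cA; first exact: subsetIr.
  move=> u v; rewrite inE => /andP [uZ uA] vA; rewrite inE vA andbT => vZ.
  apply/negP => euv; exact: (helper u v uZ vZ euv (hA u v uA vA)).
have [cx hx] : exists c, forall z, z \in X -> (z \in Z) = c.
  by apply: constZ; apply: cl cX _ => u v -> ->.
have [cy hy] : exists c, forall z, z \in ~: X -> (z \in Z) = c.
  by apply: constZ; apply: cl cY _ => u v; rewrite !inE => /negbTE -> /negbTE ->.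
case: (eqVneq cx cy) => [exy|nxy].
  have [E' [u [v [uZ vZ euv _]]]] : exists E', exists u v, [/\ u \in Z, v \notin Z, e u v & E' = [set u; v]].
    by case/set0Pn: Dn0 => E' /cutP [u [v ?]]; exists E', u, v.
  have allc : forall z, (z \in Z) = cx.
    by move=> z; case: (boolP (z \in X)) => zX; [apply: hx | rewrite exy; apply: hy; rewrite inE].
  by move: vZ; rewrite allc -(allc u) uZ.
case/cutP: EX EZ => x [y [xX yX exy ->]] EZ.
have yX' : y \in ~: X by rewrite inE.
case: cx cy nxy hx hy => [] [] // _ hx hy.
  move/negP: EZ; apply; apply: cut_in => //; first by rewrite (hx _ xX).
  by rewrite (hy _ yX').
move/negP: EZ; apply; rewrite setUC; apply: cut_in; first by rewrite (hy _ yX').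
  by rewrite (hx _ xX).
by rewrite e_sym.
Qed.



Definition bnd (Y : {set T}) := [set y in Y | [exists x, (x \notin Y) && e x y]].

Lemma card_bnd (Y : {set T}) : #|bnd Y| <= #|edge_cut e (~: Y)|.
Proof.
pose f (E : {set T}) := [pick z in E :&: Y].
have : [set Some z | z in bnd Y] \subset [set f E | E in edge_cut e (~: Y)].
  apply/subsetP => o /imsetP [b bB ->].
  move: bB; rewrite inE => /andP [bY /existsP [x /andP [xY exb]]].
  apply/imsetP; exists [set x; b].
    by apply: cut_in; rewrite ?inE ?xY ?bY.
  rewrite /f; case: pickP => [z|].
    rewrite !inE => /andP [/orP [/eqP zx|/eqP zb] zY].
      by move: xY; rewrite -zx zY.
    by rewrite zb.
  by move=> /(_ b); rewrite !inE eqxx orbT bY.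
move/subset_leq_card; rewrite card_imset; last exact: Some_inj.
move=> h; apply: (leq_trans h); exact: leq_imset_card.
Qed.

Lemma bigmin_le (I : finType) (P : pred I) (F : I -> nat) d i : P i ->
  \big[minn/d]_(j | P j) F j <= F i.
Proof.
move=> Pi; have : i \in index_enum I by rewrite mem_index_enum.
elim: (index_enum I) => [|j r IH] //=.
rewrite inE big_cons => /orP [/eqP <-|ir]; first by rewrite Pi geq_minl.
case: (P j); [exact: (leq_trans (geq_minr _ _) (IH ir)) | exact: IH ir].
Qed.

Definition Phi (Y : {set T}) := [/\ Y != set0, ~: Y != set0, conn Y, conn (~: Y) &
  forall R, is_longest_path e R -> exists2 z, z \in R & z \in Y].

Lemma step (Y : {set T}) : Phi Y ->
  lpt e <= \max_(C | is_bond e C) #|C| \/ exists Y', Phi Y' /\ #|Y'| < #|Y|.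
Proof.
case=> Yn Xn cY cX hL.
have cXX : conn (~: ~: Y) by rewrite setCK.
have Yn2 : ~: ~: Y != set0 by rewrite setCK.
have bond := bond_of Xn Yn2 cX cXX.
case: (classic (meets_all_longest e (bnd Y))) => [hm|hm].
  left; rewrite /lpt; apply: (leq_trans (@bigmin_le _ (meets_all_longestb e) (fun S : {set T} => #|S|) #|T| (bnd Y) _)).
    by rewrite /meets_all_longestb; case: excluded_middle_informative => // /(_ hm).
  apply: leq_trans (card_bnd Y) _; exact: leq_bigmax_cond bond.
right.
have [R [Rl RnB]] : exists R, is_longest_path e R /\ forall z, z \in R -> z \notin bnd Y.
  apply: NNPP => H; apply: hm => s sl; apply: NNPP => H2; apply: H; exists s.
  split => // z zs; apply/negP => zB; apply: H2; by exists z.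
have sR : sorted e R by move: Rl => [pR _]; move: pR; rewrite is_pathE => /andP [/andP [_ ?] _].
have RY : forall z, z \in R -> z \in Y.
  move=> z zR; apply/negPn/negP => zY.
  have [y yR yY] := hL R Rl.
  have [u [v [uR vR uY vY euv]]] := crossing sR (ex_intro2 _ _ y yR yY) (ex_intro2 _ _ z zR zY).
  apply: (negP (RnB u uR)); rewrite inE uY /=; apply/existsP; exists v; by rewrite vY e_sym.
have [x [b [bX bY' exb]]] := cross_edge Xn Yn2.
have bY : b \in Y by move: bY'; rewrite inE negbK.
have xY : x \notin Y by move: bX; rewrite inE.
have bB : b \in bnd Y by rewrite inE bY; apply/existsP; exists x; rewrite exb xY.
have bR : b \notin R by apply/negP => bR; move: (RnB b bR); rewrite bB.
have bW : b \in Y :\: [set z in R] by rewrite !inE bR bY.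
set K := comp (Y :\: [set z in R]) b.
have KR : forall z, z \in K -> z \notin R by move=> z /(comp_notQ bY bR) /andP [].
exists (Y :\: K); split; last first.
  apply: proper_card; apply/properP; split; first exact: subsetDl.
  by exists b => //; rewrite in_setD comp_self.
have eqC : ~: (Y :\: K) = ~: Y :|: K by apply/setP => z; rewrite !inE negb_and negbK orbC.
split.
- have [r rR] : exists r, r \in R.
    by move: Rl => [pR _]; case: (R) pR => // r ? _; exists r; exact: mem_head.
  apply/set0Pn; exists r; rewrite inE RY // andbT; apply/negP => /KR; by rewrite rR.
- by apply/set0Pn; exists b; rewrite in_setC in_setD comp_self.
- exact: conn_rest cY sR RY bY bR.
- by rewrite eqC; apply: (conn_U cX (conn_comp bW) bX (comp_self _ _) exb).
- move=> S Sl; have [z zS zR] := longest_meet Sl Rl; exists z => //.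
  by rewrite inE RY // andbT; apply/negP => /KR; rewrite zR.
Qed.

Lemma main_ind n (Y : {set T}) : #|Y| <= n -> Phi Y -> lpt e <= \max_(C | is_bond e C) #|C|.
Proof.
elim: n Y => [|n IH] Y hY pY; case: (step pY) => // [[Y' [pY' lt]]].
  by move: (leq_trans lt hY).
by apply: (IH Y' _ pY'); rewrite -ltnS (leq_trans lt hY).
Qed.

Lemma exists_longest (x0 : T) : exists P, is_longest_path e P.
Proof.
apply: NNPP => H.
have grow : forall n, exists s, is_path e s /\ n <= size s.
  elim=> [|n [s [ps hs]]]; first by exists [:: x0].
  have [t [pt lt]] : exists t, is_path e t /\ size s < size t.
    apply: NNPP => H2; apply: H; exists s; split => // t pt.
    rewrite leqNgt; apply/negP => lt; apply: H2; by exists t.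
  by exists t; split => //; exact: leq_ltn_trans hs lt.
have [s [ps hs]] := grow #|T|.+1.
move: ps; rewrite is_pathE => /andP [_ us].
by move: hs; rewrite -(card_uniqP us) ltnNge max_card.
Qed.

Lemma init_gen (Q : seq T) b : sorted e Q -> b \notin Q ->
  (forall S, is_longest_path e S -> exists2 z, z \in S & z \notin comp (setT :\: [set z in Q]) b) ->
  (exists S, is_longest_path e S) -> exists Y, Phi Y.
Proof.
move=> sQ bQ hS [P Pl].
set K := comp (setT :\: [set z in Q]) b.
have bW : b \in setT :\: [set z in Q] by rewrite !inE bQ.
have eqC : ~: (setT :\: K) = K by apply/setP => z; rewrite !inE andbT negbK.
exists (setT :\: K); split.
- by have [z _ zK] := hS P Pl; apply/set0Pn; exists z; rewrite in_setD in_setT zK.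
- by rewrite eqC; apply/set0Pn; exists b; exact: comp_self.
- by apply: conn_rest; [exact: conn_setT | exact: sQ | move=> z; rewrite inE | exact: in_setT | exact: bQ].
- by rewrite eqC; exact: conn_comp.
- by move=> S Sl; have [z zS zK] := hS S Sl; exists z; rewrite // in_setD in_setT zK.
Qed.

Lemma init_Phi : 1 < #|T| -> exists Y, Phi Y.
Proof.
move=> hT.
have [x0 _] : exists x0 : T, x0 \in T by apply/card_gt0P; exact: ltnW.
have [P Pl] := exists_longest x0.
have [pP lP] := Pl.
move: (pP); rewrite is_pathE => /andP [/andP [P0 sP] uP].
case: (boolP [exists u, u \notin P]) => [/existsP [u uNP]|allP'].
  apply: (@init_gen P u sP uNP) => [S Sl|]; last by exists P.
  have [z zS zP] := longest_meet Sl Pl; exists z => //.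
  by apply/negP => /(comp_notQ (in_setT u) uNP) /andP [_]; rewrite zP.
have allin : forall z, z \in P.
  by move=> z; apply/negPn/negP => zP; move/negP: allP'; apply; apply/existsP; exists z.
case: P P0 sP uP pP lP Pl allin {allP'} => // h Ps _ sP uP pP lP Pl allin.
move: (uP) => /= /andP [hPs uPs].
apply: (@init_gen Ps h (path_sorted sP) hPs) => [S Sl|]; last by exists (h :: Ps).
have hK : forall z, z \in comp (setT :\: [set z in Ps]) h -> z = h.
  move=> z /(comp_notQ (in_setT h) hPs) /andP [_ zPs].
  by move: (allin z); rewrite inE (negbTE zPs) orbF => /eqP.
have szT : #|T| <= size (h :: Ps).
  apply: leq_trans (card_size _); apply: subset_leq_card; apply/subsetP => z _; exact: allin.
have [pS lS] := Sl.
have szS := lS _ pP.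
move: (pS); rewrite is_pathE => /andP [/andP [_ _] uS].
case: S Sl pS lS szS uS => [|s1 [|s2 S']] Sl pS lS szS uS.
- by [].
- by move: (leq_trans hT (leq_trans szT szS)).
- case: (eqVneq s1 h) => [s1h|s1h].
    exists s2; first by rewrite !inE eqxx orbT.
    apply/negP => /hK s2h; move: uS; rewrite /= inE s1h s2h eqxx //.
  by exists s1; rewrite ?mem_head //; apply/negP => /hK; apply/eqP.
Qed.

End Proof.

Theorem corollary3 (T : finType) (e : rel T)
  (e_sym : symmetric e) (e_irr : irreflexive e)
  (T_nontriv : 1 < #|T|)
  (G_conn : connected_graph e) :
  lpt e <= \max_(C : {set {set T}} | is_bond e C) #|C|.
Proof.
have [Y pY] := init_Phi e_sym G_conn T_nontriv.
exact: (main_ind e_sym G_conn (leqnn #|Y|) pY).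
Qed.
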